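(* Let $\Gamma=(V,E)$ be a finite connected graph and $\phi:V\to\mathbb{C}$ a solution of equation (1) with $\gamma:V\to\mathbb{R}$ satisfying $\gamma(x)<1$ for all $x\in V$. Let $n_0$ be the smallest vertex degree of $\Gamma$. Then for every $N>n_0$ there is no invariant embedded framework in $\mathbb{R}^N$ with underlying graph $\Gamma$, positions $x\mapsto\vec x$, invariance function $\gamma$, and $\phi(x)=P(\vec x)$ for all $x\in V$.
   Context: Equation (1) at a vertex $x$ of degree $n(x)$: $\frac{\gamma(x)}{n(x)}\big(\sum_{y\sim x}(\phi(y)-\phi(x))\big)^2=\sum_{y\sim x}(\phi(x)-\phi(y))^2$. A framework in $\mathbb{R}^N$ is a finite simple graph with a point $\vec x\in\mathbb{R}^N$ assigned to each vertex, edges being straight segments; it is embedded if distinct vertices have distinct positions and no two edges meet except at common endpoints. With $P(y_1,\dots,y_N)=y_1+iy_2$, the framework is invariant with invariance function $\gamma:V\to\mathbb{R}$ if for every orthogonal transformation $A$ of $\mathbb{R}^N$ the function $x\mapsto P(A\vec x)$ satisfies equation (1) at every vertex with this $\gamma$. *)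

(* Defs.v *)
(* Real numbers: an arbitrary real closed field R
   (the statement is purely algebraic/semialgebraic).  Complex numbers
   are represented as pairs (re, im) : R * R with the complex square
   written out explicitly. *)
From HB Require Import structures.
From mathcomp Require Import all_boot all_order all_algebra.
Set Implicit Arguments. Unset Strict Implicit. Unset Printing Implicit Defensive.
Import Order.TTheory GRing.Theory Num.Theory.
Local Open Scope ring_scope.

Section Defs.
Variable R : rcfType.

Definition csq (z : R * R) : R * R := (z.1 ^+ 2 - z.2 ^+ 2, 2 * z.1 * z.2).
Definition csub (z w : R * R) : R * R := (z.1 - w.1, z.2 - w.2).

Variable T : finType.
Variable e : rel T.

Definition simple_graph : Prop := symmetric e /\ irreflexive e.
Definition graph_connected : Prop := forall x y : T, connect e x y.

Definition deg (x : T) : nat := #|[pred y | e x y]|.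

Definition eq1 (gamma : T -> R) (phi : T -> R * R) (x : T) : Prop :=
  let S := (\sum_(y | e x y) ((phi y).1 - (phi x).1),
            \sum_(y | e x y) ((phi y).2 - (phi x).2)) in
  let c := gamma x / (deg x)%:R in
  (c * (csq S).1, c * (csq S).2)
  = (\sum_(y | e x y) (csq (csub (phi x) (phi y))).1,
     \sum_(y | e x y) (csq (csub (phi x) (phi y))).2).

(* k-th coordinate (0-based) of a row vector in R^N *)
Definition coord N (v : 'rV[R]_N) (k : nat) : R := \sum_(i < N | val i == k) v 0 i.

(* P(y_1,...,y_N) = y_1 + i y_2 *)
Definition Pmap N (v : 'rV[R]_N) : R * R := (coord v 0, coord v 1).

Definition orthogonal N (A : 'M[R]_N) : Prop := A *m A^T = 1%:M.

Definition embedded N (pos : T -> 'rV[R]_N) : Prop :=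
  injective pos /\
  forall (a b c d : T) (s t : R),
    e a b -> e c d -> ~ ((a = c /\ b = d) \/ (a = d /\ b = c)) ->
    0 <= s <= 1 -> 0 <= t <= 1 ->
    (1 - s) *: pos a + s *: pos b = (1 - t) *: pos c + t *: pos d ->
    exists u : T, (u = a \/ u = b) /\ (u = c \/ u = d) /\
                  (1 - s) *: pos a + s *: pos b = pos u.

Definition invariant_framework N (pos : T -> 'rV[R]_N) (gamma : T -> R) : Prop :=
  forall A : 'M[R]_N, orthogonal A ->
    forall x : T, eq1 gamma (fun v => Pmap (pos v *m A)) x.

End Defs.

(* Main.v *)
Require Import Defs.
From HB Require Import structures.
From mathcomp Require Import all_boot all_order all_algebra.
From mathcomp Require Import fingroup perm.
From mathcomp Require Import ring lra zify.
Import Order.TTheory GRing.Theory Num.Theory.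
Set Implicit Arguments. Unset Strict Implicit. Unset Printing Implicit Defensive.
Local Open Scope ring_scope.

Definition dot (R : rcfType) N (z w : 'rV[R]_N) := (z *m w^T) 0 0.

Lemma dotC (R : rcfType) N (z w : 'rV[R]_N) : dot z w = dot w z.
Proof. by rewrite /dot -[w in RHS]trmxK -trmx_mul [RHS]mxE. Qed.

Lemma dotBl (R : rcfType) N (z1 z2 w : 'rV[R]_N) : dot (z1 - z2) w = dot z1 w - dot z2 w.
Proof. by rewrite /dot mulmxBl [LHS]mxE [X in _ + X]mxE. Qed.

Lemma dotZl (R : rcfType) N a (z w : 'rV[R]_N) : dot (a *: z) w = a * dot z w.
Proof. by rewrite /dot -scalemxAl [LHS]mxE. Qed.

Lemma dotE (R : rcfType) N (z w : 'rV[R]_N) : dot z w = \sum_i z 0 i * w 0 i.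
Proof. by rewrite /dot mxE; apply: eq_bigr => i _; rewrite mxE. Qed.

Lemma dot_ge0 (R : rcfType) N (z : 'rV[R]_N) : 0 <= dot z z.
Proof. by rewrite dotE; apply: sumr_ge0 => i _; rewrite -expr2 sqr_ge0. Qed.

Lemma dot_eq0 (R : rcfType) N (z : 'rV[R]_N) : dot z z = 0 -> z = 0.
Proof.
rewrite dotE => /eqP; rewrite psumr_eq0 => [|i _]; last by rewrite -expr2 sqr_ge0.
move/allP => h; apply/matrixP => i j; rewrite (ord1 i) mxE.
by have := h j (mem_index_enum j); rewrite /= mulf_eq0 orbb => /eqP.
Qed.

Lemma dot_e (R : rcfType) N (z : 'rV[R]_N) k : dot z (delta_mx 0 k) = z 0 k.
Proof. by rewrite /dot trmx_delta -colE mxE. Qed.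

Lemma householder (R : rcfType) N (u : 'rV[R]_N) (k : 'I_N) : u != 0 ->
  exists H : 'M[R]_N, H *m H^T = 1%:M /\
    forall z : 'rV_N, dot z u = 0 -> (z *m H) 0 k = 0.
Proof.
move=> un0.
set s0 := dot u u.
have s0p : 0 < s0.
  by rewrite lt0r dot_ge0 andbT; apply/eqP => /dot_eq0 h; move/eqP: un0.
set u1 := (Num.sqrt s0)^-1 *: u.
have sq0 : Num.sqrt s0 != 0 by rewrite sqrtr_eq0 -ltNge.
have hu1 : forall z, dot z u = 0 -> dot z u1 = 0.
  by move=> z hz; rewrite dotC dotZl dotC hz mulr0.
have u1u1 : dot u1 u1 = 1.
  rewrite dotZl dotC dotZl mulrA -invfM -expr2 sqr_sqrtr ?ltW //.
  by rewrite mulVf // gt_eqF.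
set e : 'rV[R]_N := delta_mx 0 k.
have ee : dot e e = 1 by rewrite dot_e mxE !eqxx.
set v := e - u1.
have [v0|vn0] := eqVneq v 0.
  exists 1%:M; split; first by rewrite trmx1 mulmx1.
  move=> z /hu1; have -> : u1 = e by apply/eqP; rewrite eq_sym -subr_eq0 -/v v0.
  by rewrite dot_e mulmx1.
set s := dot v v.
have sp : 0 < s.
  by rewrite lt0r dot_ge0 andbT; apply/eqP => /dot_eq0 h; move/eqP: vn0.
set a := 2 / s.
set B := v^T *m v.
have BB : B *m B = s *: B.
  by rewrite /B mulmxA -[v^T *m v *m v^T]mulmxA [v *m v^T]mx11_scalar
    mul_mx_scalar -scalemxAl.
exists (1%:M - a *: B); split.
  have BT : B^T = B by rewrite /B trmx_mul trmxK.
  have -> : (1%:M - a *: B)^T = 1%:M - a *: B.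
    by rewrite linearB /= trmx1 linearZ /= BT.
  rewrite mulmxBl !mulmxBr !mul1mx mulmx1 -scalemxAl -scalemxAr BB !scalerA.
  have -> : a * a * s = a + a by rewrite /a; field; rewrite gt_eqF.
  by rewrite scalerDl opprB addrK subrK.
move=> z /hu1 hz.
have zv : dot z v = z 0 k.
  by rewrite /v dotC dotBl dotC dot_e dotC hz subr0.
have vk : v 0 k = 1 - u1 0 k by rewrite /v !mxE !eqxx.
have sE : s = 2 - 2 * u1 0 k.
  rewrite /s /v !dotBl !(dotC _ (e - u1)) !dotBl ee u1u1 dot_e (dotC e) dot_e; ring.
rewrite mulmxBr mulmx1 -scalemxAr /B mulmxA [z *m v^T]mx11_scalar mul_scalar_mx -/(dot z v) zv.
clearbody v u1 e.
rewrite !mxE vk.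
have h1 : 1 - u1 0 k != 0.
  apply/eqP => h; move: sp; rewrite sE.
  have -> : 2 - 2 * u1 0 k = 2 * (1 - u1 0 k) by ring.
  by rewrite h mulr0 ltxx.
have sE' : s = 2 * (1 - u1 0 k) by rewrite sE; ring.
rewrite /a sE'; field.
exact: h1.
Qed.
Lemma ker_vec (R : fieldType) N n (M : 'M[R]_N) :
  (\rank M <= n)%N -> (n < N)%N -> exists u : 'rV_N, u != 0 /\ u *m M = 0.
Proof.
move=> hr hn; set K := kermx M.
have Kn0 : K != 0.
  rewrite -mxrank_eq0 /K mxrank_ker; apply/eqP => /eqP; rewrite subn_eq0 => h.
  by have := leq_trans h hr; rewrite leqNgt hn.
case: (pickP (fun i => row i K != 0)) => [i Hi | H0].
  by exists (row i K); split => //; rewrite -row_mul mulmx_ker row0.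
case/eqP: Kn0; apply/row_matrixP => i; rewrite row0.
by have := H0 i => /= /negbFE/eqP.
Qed.

Lemma coordE (R : rcfType) N (v : 'rV[R]_N) k (i : 'I_N) : val i = k -> Defs.coord v k = v 0 i.
Proof.
by move=> <-; rewrite /Defs.coord (big_pred1 i).
Qed.

Lemma sum_sq_le (R : realFieldType) (T : finType) (P : pred T) (a : T -> R) :
  (\sum_(y | P y) a y) ^+ 2 <= #|P|%:R * \sum_(y | P y) a y ^+ 2.
Proof.
set S := \sum_(y | P y) a y; set S2 := \sum_(y | P y) a y ^+ 2.
have cst : forall c : R, \sum_(y | P y) c = c * #|P|%:R.
  by move=> c; rewrite sumr_const mulr_natr.
have E : \sum_(y | P y) \sum_(z | P z) (a y - a z) ^+ 2
         = (#|P|%:R * S2 - S ^+ 2) *+ 2.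
  have -> : \sum_(y | P y) \sum_(z | P z) (a y - a z) ^+ 2
      = \sum_(y | P y) (a y ^+ 2 * #|P|%:R + S2 - 2 * a y * S).
    apply: eq_bigr => y _.
    rewrite /S /S2 -cst mulr_sumr -big_split -sumrB /=.
    by apply: eq_bigr => z _; ring.
  rewrite sumrB big_split /= -mulr_suml cst -mulr_suml -mulr_sumr -/S -/S2.
  ring.
have : 0 <= (#|P|%:R * S2 - S ^+ 2) *+ 2.
  by rewrite -E; apply: sumr_ge0 => y _; apply: sumr_ge0 => z _; exact: sqr_ge0.
by rewrite pmulrn_lge0 // subr_ge0.
Qed.

Definition Fq (R : rcfType) (T : finType) (e : rel T) (gamma : T -> R) N
  (pos : T -> 'rV[R]_N) (A : 'M[R]_N) (x : T) (k : 'I_N) : R :=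
  gamma x / (deg e x)%:R * (((\sum_(y | e x y) (pos y - pos x)) *m A) 0 k) ^+ 2
  - \sum_(y | e x y) (((pos y - pos x) *m A) 0 k) ^+ 2.

Lemma subE (R : rcfType) N (B C : 'rV[R]_N) k : (B - C) 0 k = B 0 k - C 0 k.
Proof. by rewrite !mxE. Qed.

Lemma eq1_re (R : rcfType) (T : finType) (e : rel T) (gamma : T -> R) N
  (pos : T -> 'rV[R]_N) (A : 'M[R]_N) x (k0 k1 : 'I_N) :
  val k0 = 0%N -> val k1 = 1%N ->
  eq1 e gamma (fun v => Pmap (pos v *m A)) x ->
  Fq e gamma pos A x k0 = Fq e gamma pos A x k1.
Proof.
move=> h0 h1 /(congr1 fst) /=.
rewrite /csq /csub /Pmap /=.
set W := \sum_(y | e x y) (pos y - pos x).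
have s0 : \sum_(y | e x y) (Defs.coord (pos y *m A) 0 - Defs.coord (pos x *m A) 0) = (W *m A) 0 k0.
  rewrite mulmx_suml summxE; apply: eq_bigr => y _.
  by rewrite !(coordE _ h0) mulmxBl subE.
have s1 : \sum_(y | e x y) (Defs.coord (pos y *m A) 1 - Defs.coord (pos x *m A) 1) = (W *m A) 0 k1.
  rewrite mulmx_suml summxE; apply: eq_bigr => y _.
  by rewrite !(coordE _ h1) mulmxBl subE.
have s2 : \sum_(y | e x y)
     ((Defs.coord (pos x *m A) 0 - Defs.coord (pos y *m A) 0) ^+ 2 -
      (Defs.coord (pos x *m A) 1 - Defs.coord (pos y *m A) 1) ^+ 2)
  = \sum_(y | e x y) (((pos y - pos x) *m A) 0 k0) ^+ 2
    - \sum_(y | e x y) (((pos y - pos x) *m A) 0 k1) ^+ 2.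
  rewrite -sumrB; apply: eq_bigr => y _.
  rewrite !(coordE _ h0) !(coordE _ h1) !mulmxBl !subE; ring.
rewrite s0 s1 s2 /Fq -/W => H.
apply/eqP; rewrite -subr_eq0; apply/eqP.
set c := gamma x / _.
set a0 := (W *m A) 0 k0. set a1 := (W *m A) 0 k1.
set X0 := \sum_(y | e x y) _. set X1 := \sum_(y | e x y) _.
have -> : c * a0 ^+ 2 - X0 - (c * a1 ^+ 2 - X1) = c * (a0 ^+ 2 - a1 ^+ 2) - (X0 - X1) by ring.
by rewrite H subrr.
Qed.

Lemma rowperm (R : rcfType) N (z : 'rV[R]_N) (H : 'M[R]_N) (a b j : 'I_N) :
  (z *m (H *m perm_mx (tperm a b))) 0 j = (z *m H) 0 (tperm a b j).
Proof.
rewrite mulmxA; have := col_permE (tperm a b)^-1 (z *m H).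
by rewrite invgK => <-; rewrite mxE tpermV.
Qed.

Lemma orth_perm (R : rcfType) N (H : 'M[R]_N) (s : 'S_N) :
  H *m H^T = 1%:M -> (H *m perm_mx s) *m (H *m perm_mx s)^T = 1%:M.
Proof.
move=> HH; rewrite trmx_mul tr_perm_mx mulmxA -(mulmxA H) -perm_mxM mulgV perm_mx1.
by rewrite mulmx1.
Qed.

Lemma parseval (R : rcfType) N (z : 'rV[R]_N) (H : 'M[R]_N) :
  H *m H^T = 1%:M -> \sum_k ((z *m H) 0 k) ^+ 2 = dot z z.
Proof.
move=> HH; have -> : \sum_k ((z *m H) 0 k) ^+ 2 = dot (z *m H) (z *m H).
  by rewrite dotE; apply: eq_bigr => k _; rewrite expr2.
by rewrite /dot trmx_mul mulmxA -(mulmxA z) HH mulmx1.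
Qed.

Lemma Fq_perm (R : rcfType) (T : finType) (e : rel T) (gamma : T -> R) N
  (pos : T -> 'rV[R]_N) (H : 'M[R]_N) x (a b j : 'I_N) :
  Fq e gamma pos (H *m perm_mx (tperm a b)) x j = Fq e gamma pos H x (tperm a b j).
Proof.
rewrite /Fq rowperm; congr (_ - _); apply: eq_bigr => y _; by rewrite rowperm.
Qed.

Theorem lemma5p5 (R : rcfType) (T : finType) (e : rel T)
    (gamma : T -> R) (phi : T -> R * R) (n0 : nat) :
  simple_graph e -> graph_connected e -> (1 < #|T|)%N ->
  (forall x : T, eq1 e gamma phi x) ->
  (forall x : T, gamma x < 1) ->
  (exists x : T, deg e x = n0) -> (forall x : T, (n0 <= deg e x)%N) ->
  forall (N : nat), (n0 < N)%N ->
  ~ (exists pos : T -> 'rV[R]_N,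
       embedded e pos /\ invariant_framework e pos gamma /\
       (forall x : T, phi x = Pmap (pos x))).
Proof.
move=> [_ eirr] conn cardT _ Hg [x degx] _ N ltN [pos [[inj _] [inv _]]].
have [y0 xy0] : exists y, e x y.
  have [z zx] : exists z, z != x.
    move/card_gt1P: cardT => [a [b [_ _ ab]]].
    case: (eqVneq a x) => [ax|ax]; last by exists a.
    by exists b; rewrite -ax eq_sym.
  case/connectP: (conn x z) => p; case: p => [_ /= zE | y p /= /andP[hxy _] _].
    by rewrite zE eqxx in zx.
  by exists y.
have degp : (0 < deg e x)%N by apply/card_gt0P; exists y0.
have h0N : (0 < N)%N by lia.
have h1N : (1 < N)%N by lia.
pose k0 := Ordinal h0N. pose k1 := Ordinal h1N.
pose d y := pos y - pos x.
pose M := \sum_(y | e x y) ((d y)^T *m d y).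
have rM : (\rank M <= deg e x)%N.
  have -> : deg e x = (\sum_(y | e x y) 1)%N by rewrite sum1_card.
  rewrite /M; elim/big_rec2: _ => [|y n B _ IH]; first by rewrite mxrank0.
  apply: leq_trans (mxrank_add _ _) _; apply: leq_add => //.
  by apply: leq_trans (mxrankM_maxl _ _) _; exact: rank_leq_col.
have [u [un0 uM]] := ker_vec rM (leq_trans (leqnn _) (eq_ind _ (fun m => m < N)%N ltN _ (esym degx))).
have du : forall y, e x y -> dot (d y) u = 0.
  have S0 : \sum_(y | e x y) dot (d y) u ^+ 2 = 0.
    have : (u *m M *m u^T) 0 0 = 0 by rewrite uM mul0mx mxE.
    rewrite /M mulmx_sumr mulmx_suml summxE => h; apply: etrans h; apply: esym.
    apply: eq_bigr => y _.
    rewrite !mulmxA -(mulmxA (u *m _)) mxE big_ord1 -/(dot u (d y)) dotC.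
    by rewrite -[(d y *m u^T) 0 0]/(dot (d y) u) expr2.
  move=> y xy; apply/eqP; rewrite -sqrf_eq0; apply/eqP.
  by move/eqP: S0; rewrite psumr_eq0 => [/allP/(_ y (mem_index_enum y))|z _];
    [rewrite xy => /eqP | exact: sqr_ge0].
have [H [HH hH]] := householder k1 un0.
have g1 : Fq e gamma pos H x k1 = 0.
  have w0 : ((\sum_(y | e x y) (pos y - pos x)) *m H) 0 k1 = 0.
    by rewrite mulmx_suml summxE big1 // => y xy; exact: hH (du y xy).
  rewrite /Fq w0 big1 => [|y xy]; first by rewrite expr2 !mulr0 subr0.
  by rewrite (hH _ (du y xy)) expr2 mulr0.
have gk : forall k, Fq e gamma pos H x k = 0.
  move=> k; case: (eqVneq k k1) => [->//|kk1].
  have := eq1_re (A := H *m perm_mx (tperm k0 k)) (k0 := k0) (k1 := k1) erefl erefl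
     (inv _ (orth_perm _ HH) x).
  by rewrite !Fq_perm tpermL tpermD // => ->.
have Sg : \sum_k Fq e gamma pos H x k = 0 by rewrite big1.
move: Sg; rewrite /Fq sumrB -mulr_sumr (parseval _ HH) exchange_big /=.
set W := dot _ _.
set c := gamma x / _.
have -> : \sum_(y | e x y) \sum_k ((pos y - pos x) *m H) 0 k ^+ 2 = \sum_(y | e x y) dot (d y) (d y).
  by apply: eq_bigr => y _; rewrite (parseval _ HH).
set D := \sum_(y | e x y) _.
move=> hWD.
have Dp : 0 < D.
  rewrite /D (bigD1 y0) //=.
  have : 0 <= \sum_(y | e x y && (y != y0)) dot (d y) (d y) by apply: sumr_ge0 => y _; exact: dot_ge0.
  have : 0 < dot (d y0) (d y0).
    rewrite lt0r dot_ge0 andbT; apply/eqP => /dot_eq0 /eqP; rewrite subr_eq0 => /eqP /inj hy.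
    by move: xy0; rewrite hy eirr.
  lra.
have W0 : 0 <= W by exact: dot_ge0.
have WD : W <= (deg e x)%:R * D.
  rewrite /W dotE.
  apply: (@le_trans _ _ (\sum_i (deg e x)%:R * \sum_(y | e x y) (d y 0 i) ^+ 2)).
    apply: ler_sum => i _; rewrite -expr2 summxE.
    exact: (sum_sq_le [pred y | e x y] (fun y => d y 0 i)).
  rewrite -mulr_sumr /D exchange_big /=.
  rewrite le_eqVlt; apply/orP; left; apply/eqP; congr (_ * _).
  by apply: eq_bigr => y _; rewrite dotE; apply: eq_bigr => i _; rewrite expr2.
have np : 0 < (deg e x)%:R :> R by rewrite ltr0n.
have E : gamma x * W = (deg e x)%:R * D.
  have cW : c * W = D by apply/eqP; rewrite -subr_eq0 hWD.
  rewrite -cW /c; field; exact: lt0r_neq0.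
have g1x := Hg x.
move: E WD W0 Dp np g1x; set n := (deg e x)%:R; set g := gamma x => E WD W0 Dp np g1x.
clear -E WD W0 Dp np g1x.
have P1 : 0 <= (1 - g) * W by apply: mulr_ge0 => //; rewrite subr_ge0 ltW.
have WnD : W = n * D.
  apply/eqP; rewrite eq_le WD /=; move: P1; rewrite mulrBl mul1r E subr_ge0 //.
have P2 : 0 < (1 - g) * W by rewrite WnD; apply: mulr_gt0; [rewrite subr_gt0 | exact: mulr_gt0].
move: P2; rewrite mulrBl mul1r E WnD subrr ltxx //.
Qed.
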